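(* Consider Algorithm 1 instantiated with a locally computed procedure choose_leader. If choose_leader returns the same honest party at all honest parties for infinitely many rounds, then each honest party commits an unbounded number of blocks.
   Context: System model: $n$ parties $\Pi=\{p_1,\dots,p_n\}$, at most $f<n/3$ faulty. A party is crashed if it halts prematurely; Byzantine if it deviates from the protocol arbitrarily; honest if neither. Non-Byzantine parties follow the protocol until they (possibly) crash. Communication is eventually synchronous: there is an unknown global stabilization time (GST) after which every message arrives within a known bound $\delta$. Blocks: a block contains transactions, a link to a parent block (implied chain back to genesis), a round number, an author id, and a certificate from which a set of $2f+1$ endorsing parties can be obtained. certified$(B,r)$ is a local predicate saying $B$ has a valid certificate ($2f+1$ endorsements) for round $r$. $B\longrightarrow B'$ means $B$ is on $B'$'s implied chain. Committing a block commits its implied chain. LBR abstraction: each party can invoke $LBR(r,\ell)$; non-Byzantine parties endorse a block with round $r$ and author $\ell$ only by calling $LBR(r,\ell)$. Every invocation returns within $\Delta_l>c\delta$ time ($c$ an implementation constant) a block with round number $r'\le r$. Round $r$ has $k$ LBR-synchronized($\ell$) invocations if $k$ honest parties invoke $LBR(r,\ell)$ after GST and their execution intervals share a common intersection of length at least $c\delta$. Guarantees: (Endorsement) if certified$(B,r)$ then $B$'s endorser set has $2f+1$ parties; (Agreement) any two certified blocks returned to honest parties by LBR satisfy $B\longrightarrow B'$ or $B'\longrightarrow B$; (Progress) if round $r$ has $k\ge 2f+1$ LBR-synchronized($\ell$) invocations and $\ell$ is honest, they all return a certified block with round number $r$ authored by $\ell$; (Blocking) if a non-Byzantine $\ell$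 never invokes $LBR(r,\ell)$, no $LBR(r,\ell)$ invocation returns a certified block formed in round $r$; (Reputation) if a non-Byzantine $p$ never invokes LBR for round $r$, no certified block with round number $r$ has $p$ among its endorsers. Pacemaker: produces new_round$(r)$ notifications at honest parties for every $r$; if all new_round$(r)$ notifications at non-Byzantine parties occur after GST, the first at $T_f$ and last at $T_l$, then $T_l-T_f\le\delta$ and no non-Byzantine party receives new_round$(r+1)$ before $T_l+\Delta_p$, where $\Delta_p=\Delta_l$. Algorithm 1 (party $p_i$): initially commit_head $:=$ genesis. Upon new_round$(r)$: leader $:=$ choose_leader$(r,$ commit_head$)$ (a local computation returning a party in $\Pi$); $B:=LBR(r,\text{leader})$; if commit_head $\longrightarrow B$, commit $B$ (and all not-yet-committed blocks on its implied chain) and set commit_head $:=B$. *)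

(* Defs.v *)
From mathcomp Require Import all_boot all_order all_algebra.
Set Implicit Arguments. Unset Strict Implicit. Unset Printing Implicit Defensive.
Import Order.TTheory GRing.Theory Num.Theory.
Local Open Scope ring_scope.

Inductive fault := Honest | Crashed | Byzantine.

Definition is_honest (k : fault) : bool := if k is Honest then true else false.
Definition non_byz (k : fault) : bool := if k is Byzantine then false else true.

Definition ancestor (Block : Type) (parent : Block -> Block) (B B' : Block) : Prop :=
  exists k : nat, iter k parent B' = B.

(* The invocations of LBR(r, _) by the parties in S (each invoked at the time
   of its new_round(r) notification) happen after GST and their execution
   intervals [new_round(r), new_round(r+1)] share a common intersection
   [t0, t0 + c*delta] of length at least c*delta. *)
Definition lbr_synchronized (R : realFieldType) (n : nat) (GST c delta : R)
  (notif : 'I_n -> nat -> option R) (S : {set 'I_n}) (r : nat) : Prop :=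
  exists t0 : R, forall p, p \in S ->
    exists tp tq, notif p r = Some tp /\ notif p r.+1 = Some tq /\
      GST <= tp /\ tp <= t0 /\ t0 + c * delta <= tq.

(* B has been committed by a party (with commit heads ch and LBR outputs out)
   by the end of round r: in some round r'+1 <= r the check
   commit_head --> B_{r'+1} succeeded and B lies on the chain of B_{r'+1}. *)
Definition committed (Block : Type) (parent : Block -> Block)
  (ch out : nat -> Block) (r : nat) (B : Block) : Prop :=
  exists r' : nat, (r' < r)%N /\ ancestor parent (ch r') (out r'.+1) /\
    ancestor parent B (out r'.+1).

(* Main.v *)
Require Import Defs.
From mathcomp Require Import all_boot all_order all_algebra.
Import Order.TTheory GRing.Theory Num.Theory.
Local Open Scope ring_scope.

From Stdlib Require Import Classical.
From mathcomp Require Import lra zify.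

Lemma bround_iter (Block : eqType) (genesis : Block) (parent : Block -> Block)
  (bround : Block -> nat) :
  parent genesis = genesis ->
  (forall B, B <> genesis -> (bround (parent B) < bround B)%N) ->
  forall k B, (bround (iter k parent B) <= bround B)%N.
Proof.
move=> Hpg Hpar; elim=> [|k IH] B //=.
apply: leq_trans (IH B).
case: (eqVneq (iter k parent B) genesis) => [->|Hne]; first by rewrite Hpg.
by apply: ltnW; apply: Hpar; apply/eqP.
Qed.

Lemma anc_genesis (Block : eqType) (genesis : Block) (parent : Block -> Block)
  (bround : Block -> nat) :
  parent genesis = genesis ->
  (forall B, B <> genesis -> (bround (parent B) < bround B)%N) ->
  forall B, ancestor parent genesis B.
Proof.
move=> Hpg Hpar B.
move: {2}(bround B) (leqnn (bround B)) => m; elim: m B => [|m IH] B Hb.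
  case: (eqVneq B genesis) => [->|Hne]; first by exists 0%N.
  by have := Hpar _ (elimN eqP Hne); lia.
case: (eqVneq B genesis) => [->|Hne]; first by exists 0%N.
have := Hpar _ (elimN eqP Hne) => Hlt.
have [k Hk] := IH (parent B) ltac:(lia).
by exists k.+1; rewrite iterSr.
Qed.

Theorem lemma9
  (R : realFieldType) (n f : nat) (kind : 'I_n -> fault)
  (GST delta c Delta_l : R)
  (Block : eqType) (genesis : Block) (parent : Block -> Block)
  (bround : Block -> nat) (author : Block -> 'I_n)
  (certified : Block -> nat -> Prop) (endorsers : Block -> {set 'I_n})
  (choose_leader : nat -> Block -> 'I_n)
  (notif : 'I_n -> nat -> option R)
  (invoked : 'I_n -> nat -> 'I_n -> Prop)
  (ch out : 'I_n -> nat -> Block) (ret_time : 'I_n -> nat -> R) :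
  (* system model *)
  (3 * f < n)%N ->
  (#|[set p | ~~ is_honest (kind p)]| <= f)%N ->
  0 < delta -> 0 < c -> c * delta < Delta_l ->
  (* blocks: implied chains back to genesis, rounds increase along chains *)
  parent genesis = genesis -> bround genesis = 0%N ->
  (forall B, B <> genesis -> (bround (parent B) < bround B)%N) ->
  (* pacemaker *)
  (forall p r, is_honest (kind p) -> (0 < r)%N -> notif p r <> None) ->
  (forall r, (0 < r)%N ->
     (forall p t, non_byz (kind p) -> notif p r = Some t -> GST <= t) ->
     (forall p q tp tq, non_byz (kind p) -> non_byz (kind q) ->
        notif p r = Some tp -> notif q r = Some tq -> tp - tq <= delta) /\
     (forall p q tp tq, non_byz (kind p) -> non_byz (kind q) ->
        notif p r = Some tp -> notif q r.+1 = Some tq -> tp + Delta_l <= tq)) ->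
  (* non-Zeno executions *)
  (forall p (T : R), non_byz (kind p) ->
     exists r0, forall r t, (r0 <= r)%N -> notif p r = Some t -> T <= t) ->
  (* Algorithm 1 at honest parties *)
  (forall p, is_honest (kind p) -> ch p 0%N = genesis) ->
  (forall p r, is_honest (kind p) ->
     ancestor parent (ch p r) (out p r.+1) -> ch p r.+1 = out p r.+1) ->
  (forall p r, is_honest (kind p) ->
     ~ ancestor parent (ch p r) (out p r.+1) -> ch p r.+1 = ch p r) ->
  (forall p r l, is_honest (kind p) -> (0 < r)%N ->
     (invoked p r l <-> l = choose_leader r (ch p r.-1))) ->
  (* LBR: returns within Delta_l a (certified) block of round <= r *)
  (forall p r t, is_honest (kind p) -> (0 < r)%N -> notif p r = Some t ->
     t <= ret_time p r <= t + Delta_l) ->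
  (forall p r, is_honest (kind p) -> (0 < r)%N ->
     (bround (out p r) <= r)%N /\
     (out p r = genesis \/ exists r', certified (out p r) r')) ->
  (* LBR Endorsement *)
  (forall B r, certified B r -> (2 * f + 1 <= #|endorsers B|)%N) ->
  (* LBR Agreement *)
  (forall p q r r' r1 r2, is_honest (kind p) -> is_honest (kind q) ->
     (0 < r)%N -> (0 < r')%N ->
     certified (out p r) r1 -> certified (out q r') r2 ->
     ancestor parent (out p r) (out q r') \/ ancestor parent (out q r') (out p r)) ->
  (* LBR Progress *)
  (forall r l (S : {set 'I_n}), (0 < r)%N -> is_honest (kind l) ->
     (forall p, p \in S -> is_honest (kind p) /\ invoked p r l) ->
     (2 * f + 1 <= #|S|)%N ->
     lbr_synchronized GST c delta notif S r ->
     forall p, p \in S ->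
       certified (out p r) r /\ bround (out p r) = r /\ author (out p r) = l) ->
  (* LBR Blocking *)
  (forall r l, (0 < r)%N -> non_byz (kind l) -> ~ invoked l r l ->
     forall p, is_honest (kind p) -> invoked p r l ->
       ~ (certified (out p r) r /\ bround (out p r) = r)) ->
  (* LBR Reputation *)
  (forall p r, (0 < r)%N -> non_byz (kind p) -> (forall l, ~ invoked p r l) ->
     forall B r', certified B r' -> bround B = r -> p \notin endorsers B) ->
  (* hypothesis of the lemma *)
  (forall N : nat, exists r : nat, (N <= r)%N /\ (0 < r)%N /\
     exists l, is_honest (kind l) /\
       forall p, is_honest (kind p) -> choose_leader r (ch p r.-1) = l) ->
  (* conclusion: unboundedly many committed blocks *)
  forall p, is_honest (kind p) ->
  forall k : nat, exists (r : nat) (s : seq Block),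
    uniq s /\ (k <= size s)%N /\
    (forall B, B \in s -> committed parent (ch p) (out p) r B).
Proof.
move=> Hf Hbyz Hd Hc HcD Hpg Hbg Hpar Hnotif Hpace Hzeno Hch0 Hch1 Hch2 Hinv Hret
  Hout Hend Hagr Hprog Hblock Hrep Hgood p Hp.
have hnb : forall q, is_honest (kind q) -> non_byz (kind q) by move=> q; case: (kind q).
have [r0 Hr0] : exists r0, forall q, non_byz (kind q) -> forall r t,
    (r0 <= r)%N -> notif q r = Some t -> GST <= t.
  suff: forall s : seq 'I_n, exists r0, forall q, q \in s -> non_byz (kind q) ->
      forall r t, (r0 <= r)%N -> notif q r = Some t -> GST <= t.
    by case/(_ (enum 'I_n)) => r0 H; exists r0 => q Hq; apply: H => //; rewrite mem_enum.
  elim=> [|q s [r1 IH]]; first by exists 0%N.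
  have [r2 H2]: exists r2, non_byz (kind q) -> forall r t, (r2 <= r)%N ->
      notif q r = Some t -> GST <= t.
    case Hq: (non_byz (kind q)); last by exists 0%N.
    by have [r2 H2] := Hzeno q GST Hq; exists r2 => _.
  exists (maxn r1 r2) => x; rewrite inE => /orP [/eqP-> | Hx] Hnb r t Hr Ht.
  - by apply: (H2 Hnb r t) => //; lia.
  - by apply: (IH x Hx Hnb r t) => //; lia.
have Hchinv : forall m, ch p m = genesis \/
    exists m', (0 < m')%N /\ (m' <= m)%N /\ ch p m = out p m'.
  elim=> [|m IH]; first by left; apply: Hch0.
  case: (classic (ancestor parent (ch p m) (out p m.+1))) => Ha.
    by right; exists m.+1; split; [lia|split; [lia|apply: Hch1]].
  rewrite (Hch2 p m Hp Ha); case: IH => [->|[m' [H1 [H2 ->]]]]; first by left.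
  by right; exists m'; split; [|split]; [lia|lia|].
have anc_ch : forall r, (0 < r)%N -> certified (out p r) r -> bround (out p r) = r ->
    ancestor parent (ch p r.-1) (out p r).
  move=> r Hr Hcr Hb.
  case: (Hchinv r.-1) => [->|[m' [Hm1 [Hm2 ->]]]]; first exact: (anc_genesis _ _ _ _ Hpg Hpar).
  have [Hbm Hgc] := Hout p m' Hp Hm1.
  case: Hgc => [->|[r1 Hc1]]; first exact: (anc_genesis _ _ _ _ Hpg Hpar).
  case: (Hagr p p m' r r1 r Hp Hp Hm1 Hr Hc1 Hcr) => // [[k Hk]].
  have := bround_iter _ _ _ _ Hpg Hpar k (out p m'); rewrite Hk Hb; lia.
have Hgood' : forall N, exists r, (N <= r)%N /\
    committed parent (ch p) (out p) r.+1 (out p r) /\ bround (out p r) = r.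
  move=> N; have [r [HNr [Hr0' [l [Hl Hcl]]]]] := Hgood (maxn N r0).
  exists r.
  set H := [set q | is_honest (kind q)].
  have HS : forall q, q \in H -> is_honest (kind q) /\ invoked q r l.
    move=> q; rewrite inE => Hq; split => //; apply/(Hinv q r l Hq Hr0').
    by rewrite Hcl.
  have Hcard : (2 * f + 1 <= #|H|)%N.
    have HC : #|[set q | ~~ is_honest (kind q)]| = #|~: H|.
      by apply: eq_card => x; rewrite !inE.
    have := cardsC H; rewrite card_ord; lia.
  have Hsync : lbr_synchronized GST c delta notif H r.
    have [_ Hnext] := Hpace r Hr0'
      (fun q t Hq Ht => Hr0 q Hq r t ltac:(lia) Ht).
    pose g q := odflt 0 (notif q r).
    have Hp' : is_honest (kind p) by [].
    case: (@arg_maxP _ _ _ p (fun q => is_honest (kind q)) g Hp') => pm Hpm Hmax.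
    exists (g pm) => q; rewrite inE => Hq.
    case Eq: (notif q r) => [tp|]; last by exfalso; apply: (Hnotif q r Hq Hr0').
    case Eq1: (notif q r.+1) => [tq|]; last by exfalso; apply: (Hnotif q r.+1 Hq).
    case Epm: (notif pm r) => [tm|]; last by exfalso; apply: (Hnotif pm r Hpm Hr0').
    exists tp, tq; split; first by []. split; first by [].
    have Hle := Hmax q Hq; rewrite /g Eq Epm /= in Hle.
    split; first by apply: (Hr0 q (hnb q Hq) r tp) => //; lia.
    split; first by rewrite /g Epm.
    have := Hnext pm q tm tq (hnb _ Hpm) (hnb _ Hq) Epm Eq1.
    rewrite /g Epm /=. move=> Hn.
    have Hcd : c * delta <= Delta_l by apply: ltW.
    lra.
  have [Hcr [Hb _]] := Hprog r l H Hr0' Hl HS Hcard Hsync p ltac:(by rewrite inE).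
  split; first lia.
  split => //; exists r.-1; split; first lia.
  rewrite prednK //; split; first exact: anc_ch.
  by exists 0%N.
suff: forall k, exists RR s, uniq s /\ (k <= size s)%N /\
    (forall B, B \in s -> committed parent (ch p) (out p) RR B /\ (bround B < RR)%N).
  move=> H k; have [RR [s [Hu [Hk Hs]]]] := H k.
  by exists RR, s; split => //; split => // B /Hs [].
elim=> [|k [RR [s [Hu [Hk Hs]]]]]; first by exists 0%N, [::].
have [r [HRr [Hcm Hb]]] := Hgood' RR.
exists r.+1, (out p r :: s); split.
  rewrite /= Hu andbT; apply/negP => Hin.
  by have [_] := Hs _ Hin; rewrite Hb; lia.
split; first by rewrite /=; lia.
move=> B; rewrite inE => /orP [/eqP->|HB]; first by split => //; rewrite Hb.
have [[r' [Hr' Hrest]] HbB] := Hs B HB.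
split; last by lia.
by exists r'; split; first lia.
Qed.
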